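(* Consider the explicit mass update of the kinetic finite volume scheme for the $N$-layer Saint-Venant system with mass exchange, as described in the context. Assume that the function $\chi$ has compact support contained in $[-w_M,w_M]$. Fix $n$ and suppose $H_i^n\ge0$ for all $i$. If the time step $\Delta t^n>0$ satisfies, for every layer $\alpha\in\{1,\dots,N\}$ and every cell $i$, $$\Delta t^n\le\frac{l_\alpha H_i^n\,\Delta x_i}{l_\alpha H_i^n\big(|u^n_{\alpha,i}|+w_M c_i^n\big)+\Delta x_i\big([G^{n+1/2}_{\alpha+1/2,i}]_-+[G^{n+1/2}_{\alpha-1/2,i}]_+\big)}$$ (ratios with zero denominator being omitted), then $H_i^{n+1}\ge0$ for all $i$. Consequently, if this CFL condition holds at every time step and $H_i^0\ge0$ for all $i$, then $H_i^n\ge0$ for all $i$ and $n$. This condition does not depend on the bottom slope.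
   Context: Let $g>0$, $N\ge1$, and $l_1,\dots,l_N\ge0$ with $\sum_\alpha l_\alpha=1$. The real line is partitioned into cells $C_i$ of lengths $\Delta x_i>0$; $\sigma_i^n=\Delta t^n/\Delta x_i$. At time level $n$ the discrete unknowns are the total water heights $H_i^n\ge0$ and arbitrary real layer velocities $u^n_{\alpha,i}$. Let $\chi:\mathbb{R}\to\mathbb{R}$ satisfy $\chi(-w)=\chi(w)\ge0$, $\int\chi=\int w^2\chi=1$. Set $c_i^n=\sqrt{gH_i^n/2}$ and define the discrete Gibbs densities $M^n_{\alpha,i}(\xi)=\frac{l_\alpha H_i^n}{c_i^n}\chi\big(\frac{\xi-u^n_{\alpha,i}}{c_i^n}\big)$ (with $M^n_{\alpha,i}\equiv0$ if $H_i^n=0$). Define $F^{\pm}_{h_\alpha}(X_i)=\int_{\pm\xi\ge0}\xi M^n_{\alpha,i}(\xi)\,d\xi$ (with $\xi<0$ for the minus sign), and $\mathcal F^n_{h_\alpha,i}=F^+_{h_\alpha}(X_i)+F^-_{h_\alpha}(X_{i+1})-F^+_{h_\alpha}(X_{i-1})-F^-_{h_\alpha}(X_i)$. The mass exchange terms are $G^{n+1/2}_{1/2,i}=G^{n+1/2}_{N+1/2,i}=0$ and, for $\alpha=1,\dots,N$, $$\Delta x_i\,G^{n+1/2}_{\alpha+1/2,i}=\sum_{j=1}^{\alpha}\Big(\mathcal F^n_{h_j,i}-l_j\sum_{p=1}^N\mathcal F^n_{h_p,i}\Big).$$ The new total height is $H_i^{n+1}=H_i^n-\sigma_i^n\sum_{\alpha=1}^N\mathcal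 F^n_{h_\alpha,i}$ (the topographic source term and the implicit viscosity/friction step do not modify $H$). Notation: $[a]_+=\max(0,a)$, $[a]_-=\max(0,-a)$. *)

(* Defs.v *)
From HB Require Import structures.
From mathcomp Require Import all_boot all_order all_algebra.
From mathcomp Require Import all_classical all_reals all_analysis.
Set Implicit Arguments. Unset Strict Implicit. Unset Printing Implicit Defensive.
Import Order.TTheory GRing.Theory Num.Theory.
Local Open Scope ring_scope.
Local Open Scope classical_set_scope.

Section Scheme.
Variables (R : realType) (g : R) (N : nat) (l : nat -> R) (chi : R -> R).
(* cells are indexed by i : int, layers by alpha in {1,..,N} *)
Variables (dx : int -> R) (H : int -> R) (u : nat -> int -> R).

Definition cel (i : int) : R := Num.sqrt (g * H i / 2).

Definition Mgibbs (alpha : nat) (i : int) (xi : R) : R :=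
  if H i == 0 then 0
  else l alpha * H i / cel i * chi ((xi - u alpha i) / cel i).

Definition Fplus (alpha : nat) (i : int) : R :=
  fine (\int[@lebesgue_measure R]_(xi in [set xi : R | (0 <= xi)%R])
          ((xi * Mgibbs alpha i xi)%R)%:E)%E.

Definition Fminus (alpha : nat) (i : int) : R :=
  fine (\int[@lebesgue_measure R]_(xi in [set xi : R | (xi < 0)%R])
          ((xi * Mgibbs alpha i xi)%R)%:E)%E.

Definition Flux (alpha : nat) (i : int) : R :=
  Fplus alpha i + Fminus alpha (i + 1) - Fplus alpha (i - 1) - Fminus alpha i.

(* Gex a i = G^{n+1/2}_{a+1/2,i}, for a = 0..N; zero for a = 0 and a = N *)
Definition Gex (a : nat) (i : int) : R :=
  if (a == 0%N) || (N <= a)%N then 0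
  else (dx i)^-1 * \sum_(1 <= j < a.+1)
         (Flux j i - l j * \sum_(1 <= p < N.+1) Flux p i).

Definition Hnew (dt : R) (i : int) : R :=
  H i - dt / dx i * \sum_(1 <= alpha < N.+1) Flux alpha i.

Definition CFL (wM dt : R) : Prop :=
  forall (alpha : nat) (i : int), (1 <= alpha <= N)%N ->
    let den := l alpha * H i * (`|u alpha i| + wM * cel i)
               + dx i * (Num.max 0 (- Gex alpha i) + Num.max 0 (Gex alpha.-1 i)) in
    den != 0 -> dt <= l alpha * H i * dx i / den.

End Scheme.

(* Main.v *)
Require Import Defs.
From HB Require Import structures.
From mathcomp Require Import all_boot all_order all_algebra.
From mathcomp Require Import all_classical all_reals all_analysis measurable_realfun.
From mathcomp Require Import lra ring.
Import Order.TTheory GRing.Theory Num.Theory.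
Local Open Scope ring_scope.
Local Open Scope classical_set_scope.
Section S.
Variable R : realType.
Variables (u c : R).
Hypothesis c0 : 0 < c.
Definition phiA (x : R) : R := (x - u) / c.
Lemma mphiA0 : measurable_fun setT phiA.
Proof. rewrite /phiA. apply: measurable_funM => //. exact: measurable_funB. Qed.
Lemma mphiA : measurable_fun (setT : set (measurableTypeR R)) (phiA : _ -> measurableTypeR R).
Proof. exact: mphiA0. Qed.
Definition pfA : set (measurableTypeR R) -> \bar R := pushforward (@lebesgue_measure R) (phiA : measurableTypeR R -> measurableTypeR R).
Local Open Scope ereal_scope.
Let pfA0 : pfA set0 = 0.
Proof. by rewrite /pfA /pushforward preimage_set0 measure0. Qed.
Let pfA_ge0 A : 0 <= pfA A.
Proof. rewrite /pfA /pushforward; exact: measure_ge0. Qed.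
Let pfA_sigma_additive : semi_sigma_additive pfA.
Proof.
move=> F mF tF mUF; rewrite /pfA /pushforward preimage_bigcup.
apply: measure_semi_sigma_additive.
- by move=> n; rewrite -[X in measurable X]setTI; exact: mphiA.
- apply/trivIsetP => /= i j _ _ ij; rewrite -preimage_setI.
  by move/trivIsetP : tF => /(_ _ _ _ _ ij) ->//; rewrite preimage_set0.
- by rewrite -preimage_bigcup -[X in measurable X]setTI; exact: mphiA.
Qed.
HB.instance Definition _ := isMeasure.Build _ _ _ pfA pfA0 pfA_ge0 pfA_sigma_additive.
Let ci0 : (0 <= c^-1)%R. Proof. by rewrite invr_ge0 ltW. Qed.
Definition kc : {nonneg R} := NngNum ci0.
Lemma pfA_itv a b : pfA `]a, b] = (c * (if (a < b)%R then b - a else 0))%:E.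
Proof.
rewrite /pfA /pushforward.
have -> : phiA @^-1` `]a, b] = `](c * a + u)%R, (c * b + u)%R].
  apply/seteqP; split => x /=; rewrite !in_itv/= /phiA.
    by rewrite ltr_pdivlMr // ler_pdivrMr // => /andP[h1 h2]; apply/andP; split; lra.
  by rewrite ltr_pdivlMr // ler_pdivrMr // => /andP[h1 h2]; apply/andP; split; lra.
rewrite lebesgue_measure_itv /=.
rewrite lte_fin.
case: (ltrP a b) => ab.
  rewrite ifT; last by rewrite ltrD2r ltr_pM2l.
  by rewrite -EFinD; congr EFin; ring.
rewrite ifF; last by apply/negbTE; rewrite -leNgt lerD2r ler_pM2l.
by rewrite mulr0.
Qed.
Lemma leb_pfA A : measurable A -> lebesgue_measure A = mscale kc pfA A.
Proof.
move=> mA; apply: (@lebesgue_measure_unique R (mscale kc pfA)) => // _ [[a b] _ <-] /=.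
rewrite /mscale /= pfA_itv lebesgue_measure_itv /=.
rewrite lte_fin -EFinM mulrA mulVf ?mul1r ?gt_eqF //.
by case: (a < b)%R; rewrite ?EFinD.
Qed.
Lemma change_var (f : R -> R) : measurable_fun setT f -> (forall x, (0 <= f x)%R) ->
  \int[lebesgue_measure]_x (f (phiA x))%:E = c%:E * \int[lebesgue_measure]_x (f x)%:E.
Proof.
move=> mf f0.
have -> : \int[lebesgue_measure]_x (f x)%:E = \int[mscale kc pfA]_x (f x)%:E.
  by apply: eq_measure_integral => A mA _; exact: leb_pfA.
rewrite ge0_integral_mscale //; last 2 first.
  exact/measurable_EFinP.
  by move=> x _; rewrite lee_fin.
rewrite /pfA ge0_integral_pushforward //; last 3 first.
  exact: mphiA.
  exact/measurable_EFinP.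
  by move=> x _; rewrite lee_fin.
rewrite preimage_setT /= muleA -EFinM mulfV ?gt_eqF // mul1e.
by [].
Qed.
End S.

Lemma fine_le2 (R : realType) (A B : \bar R) r : (0 <= A)%E -> (0 <= B)%E ->
  (A + B <= r%:E)%E -> fine A + fine B <= r.
Proof.
case: A => [x| |]; case: B => [y| |] => //= _ _.
Qed.

Section Flux.
Variables (R : realType) (g : R) (l : nat -> R) (chi : R -> R) (wM : R).
Variables (H : int -> R) (u : nat -> int -> R) (a : nat) (i : int).
Hypotheses (g0 : 0 < g) (la0 : 0 <= l a) (H0 : forall j, 0 <= H j).
Hypotheses (mchi : measurable_fun setT chi) (chi0 : forall w, 0 <= chi w).
Hypothesis chi1 : (\int[@lebesgue_measure R]_w (chi w)%:E = 1)%E.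
Hypothesis supp : forall w, chi w != 0 -> -wM <= w <= wM.
Hypothesis wM0 : 0 <= wM.

Local Notation M := (Mgibbs g l chi H u a i).
Local Notation c := (cel g H i).
Local Notation K := (`|u a i| + wM * c).

Lemma c_ge0 : 0 <= c.
Proof. exact: sqrtr_ge0. Qed.

Lemma c_gt0 : H i != 0 -> 0 < c.
Proof.
move=> Hn; rewrite /cel sqrtr_gt0 divr_gt0 // mulr_gt0 //.
by rewrite lt_neqAle eq_sym Hn H0.
Qed.

Lemma M_ge0 x : 0 <= M x.
Proof.
rewrite /Mgibbs; case: ifP => // _.
apply: mulr_ge0 => //; apply: divr_ge0; [exact: mulr_ge0 | exact: c_ge0].
Qed.

Lemma K_ge0 : 0 <= K.
Proof. by rewrite addr_ge0 // mulr_ge0 // c_ge0. Qed.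

Lemma absM x : `|x| * M x <= K * M x.
Proof.
rewrite /Mgibbs; case: ifP => Hz; first by rewrite !mulr0.
have [->|chn] := eqVneq (chi ((x - u a i) / cel g H i)) 0; first by rewrite !mulr0.
apply: ler_wpM2r; first by have := M_ge0 x; rewrite /Mgibbs Hz.
have cp := c_gt0 (negbT Hz).
have h : `|x - u a i| <= wM * c.
  by have := supp _ chn; rewrite -ler_norml normrM normfV (gtr0_norm cp) ler_pdivrMr.
have -> : x = u a i + (x - u a i) by ring.
by rewrite (le_trans (ler_normD _ _)) // lerD2l.
Qed.

Lemma mM : measurable_fun setT M.
Proof.
rewrite /Mgibbs; case: (H i == 0); first exact: measurable_cst.
change (measurable_fun setT (( *%R (l a * H i / c)) \o (chi \o @phiA R (u a i) c))).
exact: (measurableT_comp (mulrl_measurable _) (measurableT_comp mchi (@mphiA0 R (u a i) c))).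
Qed.

Lemma intM : (\int[@lebesgue_measure R]_x (M x)%:E = (l a * H i)%:E)%E.
Proof.
rewrite /Mgibbs; case: eqP => Hz.
  by rewrite Hz mulr0 integral0.
have cp := c_gt0 (introN eqP Hz).
under eq_integral do rewrite EFinM.
rewrite ge0_integralZl_EFin //; last first.
- by apply: divr_ge0; [exact: mulr_ge0 | exact: ltW].
- apply/measurable_EFinP.
  exact: (measurableT_comp mchi (@mphiA0 R (u a i) c)).
- by move=> x _; rewrite lee_fin.
rewrite (@change_var R (u a i) c cp) // chi1 mule1 -EFinM divfK //.
by rewrite gt_eqF.
Qed.

Lemma mDp : measurable ([set xi : R | 0 <= xi] : set (measurableTypeR R)).
Proof.
rewrite (_ : [set xi | _] = `[0, +oo[%classic); first exact: measurable_itv.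
by apply/seteqP; split => x /=; rewrite in_itv /= andbT.
Qed.

Lemma mDn : measurable ([set xi : R | xi < 0] : set (measurableTypeR R)).
Proof.
rewrite (_ : [set xi | _] = `]-oo, 0[%classic); first exact: measurable_itv.
by apply/seteqP; split => x /=; rewrite in_itv.
Qed.

Lemma Fplus_ge0 : 0 <= Fplus g l chi H u a i.
Proof.
rewrite /Fplus; apply: fine_ge0; apply: integral_ge0 => x /= x0.
by rewrite lee_fin mulr_ge0 // M_ge0.
Qed.

Lemma FminusE : Fminus g l chi H u a i =
  - fine (\int[@lebesgue_measure R]_(x in [set xi : R | (xi < 0)%R]) ((- x) * M x)%:E)%E.
Proof.
rewrite /Fminus -fineN -integral_ge0N.
  by congr fine; apply: eq_integral => x _; rewrite -EFinN mulNr opprK.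
by move=> x /= x0; rewrite lee_fin mulr_ge0 ?M_ge0 // oppr_ge0 ltW.
Qed.

Lemma Fminus_le0 : Fminus g l chi H u a i <= 0.
Proof.
rewrite FminusE oppr_le0; apply: fine_ge0; apply: integral_ge0 => x /= x0.
by rewrite lee_fin mulr_ge0 ?M_ge0 // oppr_ge0 ltW.
Qed.


Lemma mxM (D : set (measurableTypeR R)) (k : R -> R) : measurable_fun setT k ->
  measurable_fun D (fun x => (k x * M x)%:E).
Proof.
move=> mk; apply/measurable_EFinP; apply: measurable_funTS.
exact: measurable_funM mk mM.
Qed.

Lemma Fbound : Fplus g l chi H u a i - Fminus g l chi H u a i <= l a * H i * K.
Proof.
rewrite FminusE opprK /Fplus.
apply: fine_le2.
- apply: integral_ge0 => x /= x0; by rewrite lee_fin mulr_ge0 // M_ge0.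
- by apply: integral_ge0 => x /= x0; rewrite lee_fin mulr_ge0 ?M_ge0 // oppr_ge0 ltW.
apply: (@le_trans _ _ (\int[@lebesgue_measure R]_(x in [set xi : R | (0 <= xi)%R]) ((K * M x)%R)%:E +
   \int[@lebesgue_measure R]_(x in [set xi : R | (xi < 0)%R]) ((K * M x)%R)%:E)%E).
  apply: leeD; apply: ge0_le_integral.
  - exact: mDp.
  - by move=> x /= x0; rewrite lee_fin mulr_ge0 // M_ge0.
  - exact: mxM.
  - exact: mxM (measurable_cst _).
  - move=> x /= x0; rewrite lee_fin; apply: le_trans (absM x).
    by rewrite ger0_norm.
  - exact: mDn.
  - by move=> x /= x0; rewrite lee_fin mulr_ge0 ?M_ge0 // oppr_ge0 ltW.
  - by apply: mxM.
  - exact: mxM (measurable_cst _).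
  - move=> x /= x0; rewrite lee_fin; apply: le_trans (absM x).
    by rewrite ltr0_norm.
rewrite -ge0_integral_setU.
- rewrite (_ : [set xi | _] `|` _ = setT); last first.
    by apply/seteqP; split => x //= _; case: (leP 0 x) => h; [left | right].
  under eq_integral do rewrite EFinM.
  rewrite ge0_integralZl_EFin //.
  + by rewrite intM -EFinM mulrC.
  + by move=> x _; rewrite lee_fin M_ge0.
  + by apply/measurable_EFinP; exact: mM.
  + exact: K_ge0.
- exact: mDp.
- exact: mDn.
- exact: mxM (measurable_cst _).
- by move=> x _; rewrite lee_fin mulr_ge0 ?K_ge0 ?M_ge0.
- rewrite disj_set2E; apply/eqP/seteqP; split => x //= [h1 h2].
  by move: (le_lt_trans h1 h2); rewrite ltxx.
Qed.

End Flux.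

Theorem mainTheorem3 (R : realType) (g : R) (N : nat) (l : nat -> R)
  (chi : R -> R) (wM : R) (dx : int -> R) :
  0 < g -> (1 <= N)%N ->
  (forall alpha, (1 <= alpha <= N)%N -> 0 <= l alpha) ->
  \sum_(1 <= alpha < N.+1) l alpha = 1 ->
  measurable_fun setT chi ->
  (forall w, chi (- w) = chi w) -> (forall w, 0 <= chi w) ->
  (\int[@lebesgue_measure R]_w (chi w)%:E = 1)%E ->
  (\int[@lebesgue_measure R]_w ((w ^+ 2 * chi w)%R)%:E = 1)%E ->
  (forall w, chi w != 0 -> -wM <= w <= wM) ->
  (forall i, 0 < dx i) ->
  (* one time step *)
  (forall (H : int -> R) (u : nat -> int -> R) (dt : R),
     (forall i, 0 <= H i) -> 0 < dt ->
     CFL g N l chi dx H u wM dt ->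
     forall i, 0 <= Hnew g N l chi dx H u dt i)
  /\
  (* all time steps *)
  (forall (H : nat -> int -> R) (u : nat -> nat -> int -> R) (dt : nat -> R),
     (forall i, 0 <= H 0%N i) ->
     (forall n, 0 < dt n) ->
     (forall n, CFL g N l chi dx (H n) (u n) wM (dt n)) ->
     (forall n i, H n.+1 i = Hnew g N l chi dx (H n) (u n) (dt n) i) ->
     forall n i, 0 <= H n i).
Proof.
move=> g0 N1 l0 sl mchi _ chi0 chi1 _ supp dx0.
have wM0 : 0 <= wM.
  case: (leP 0 wM) => // wMn; exfalso.
  have : (\int[@lebesgue_measure R]_w (chi w)%:E = 0)%E.
    rewrite -(integral0 lebesgue_measure setT); apply: eq_integral => x _.
    have [->//|/supp/andP[h1 h2]] := eqVneq (chi x) 0.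
    by exfalso; lra.
  by rewrite chi1 => /eqP; rewrite onee_eq0.
have step : forall (H : int -> R) (u : nat -> int -> R) (dt : R),
     (forall i, 0 <= H i) -> 0 < dt ->
     CFL g N l chi dx H u wM dt ->
     forall i, 0 <= Hnew g N l chi dx H u dt i.
  move=> H u dt H0 dt0 cfl i.
  set S := \sum_(1 <= p < N.+1) Flux g l chi H u p i.
  have GexE : forall a, (a <= N)%N -> dx i * Gex g N l chi dx H u a i =
      \sum_(1 <= j < a.+1) (Flux g l chi H u j i - l j * S).
    move=> a aN; rewrite /Gex; case: ifP => h.
      case/orP: h => [/eqP -> | Na]; first by rewrite big_geq // mulr0.
      have -> : a = N by apply/eqP; rewrite eqn_leq aN Na.
      by rewrite mulr0 sumrB -mulr_suml sl mul1r subrr.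
    by rewrite mulrA mulfV ?mul1r // gt_eqF.
  have key : forall a, (1 <= a <= N)%N ->
      Flux g l chi H u a i - dx i * Gex g N l chi dx H u a i
        + dx i * Gex g N l chi dx H u a.-1 i = l a * S.
    case=> // b /= bN.
    rewrite GexE // GexE ?(ltnW bN) // big_nat_recr //=.
    ring.
  have term : forall a, (1 <= a <= N)%N -> 0 <= l a * Hnew g N l chi dx H u dt i.
    move=> a aN.
    have la0 := l0 a aN.
    have -> : l a * Hnew g N l chi dx H u dt i =
        l a * H i - dt / dx i * (Flux g l chi H u a i - dx i * Gex g N l chi dx H u a i
        + dx i * Gex g N l chi dx H u a.-1 i).
      by rewrite key // /Hnew -/S mulrBr mulrCA.
    have hF : Flux g l chi H u a i <= l a * H i * (`|u a i| + wM * cel g H i).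
      rewrite /Flux.
      have := @Fbound _ g l chi wM H u a i g0 la0 H0 mchi chi0 chi1 supp wM0.
      have := @Fminus_le0 _ g l chi H u a (i + 1) la0 H0 chi0.
      have := @Fplus_ge0 _ g l chi H u a (i - 1) la0 H0 chi0.
      lra.
    set G1 := Gex g N l chi dx H u a i.
    set G0 := Gex g N l chi dx H u a.-1 i.
    set Q := (X in dt / dx i * X).
    set den := l a * H i * (`|u a i| + wM * cel g H i)
      + dx i * (Num.max 0 (- G1) + Num.max 0 G0).
    have dxp := dx0 i.
    have hQ : Q <= den.
      rewrite /Q /den.
      have h1 : - G1 <= Num.max 0 (- G1) by rewrite le_max lexx orbT.
      have h2 : G0 <= Num.max 0 G0 by rewrite le_max lexx orbT.
      nra.
    have den0 : 0 <= den.
      rewrite /den; apply: addr_ge0; first by apply: mulr_ge0; [exact: mulr_ge0 | exact: K_ge0].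
      by apply: mulr_ge0; [exact: ltW | apply: addr_ge0; rewrite le_max lexx].
    have lH0 : 0 <= l a * H i by exact: mulr_ge0.
    have r0 : 0 <= dt / dx i by apply: divr_ge0; exact: ltW.
    have rdx : dt / dx i * dx i = dt by rewrite divfK // gt_eqF.
    have [d0|dn0] := eqVneq den 0.
      rewrite d0 in hQ; nra.
    move: (cfl a i aN) => /= /(_ dn0).
    rewrite -/G1 -/G0 -/den ler_pdivlMr; last by rewrite lt_neqAle eq_sym dn0.
    move=> hc.
    nra.
  have -> : Hnew g N l chi dx H u dt i =
      \sum_(1 <= a < N.+1) l a * Hnew g N l chi dx H u dt i by rewrite -mulr_suml sl mul1r.
  rewrite big_nat_cond; apply: sumr_ge0 => a /andP[/andP[h1 h2] _].
  by apply: term; rewrite h1 -ltnS h2.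
split; first exact: step.
move=> H u dt H00 dtp cfl rec; elim => [|n IH] i; first exact: H00.
by rewrite rec; apply: step.
Qed.
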